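(* Let $A$ be a noetherian ring and $M$ a finitely generated $A$-module. Suppose that there is an injective flat ring homomorphism $A\to A'$ such that $M'=M\otimes_A A'$ is a locally free $A'$-module. Then the torsionless quotient $M^{tl}$ of $M$ is isomorphic to the image of the induced map $M\to M'$, $m\mapsto m\otimes 1$ (compatibly with the quotient maps from $M$).
   Context: For an $A$-module $M$, write $M^\ast=\operatorname{Hom}_A(M,A)$. The torsionless quotient $M^{tl}$ of $M$ is the image of the canonical map $M\to M^{\ast\ast}$; equivalently $M^{tl}=M/\bigcap_g\ker(g)$, where $g$ runs over all $A$-linear maps from $M$ to free $A$-modules. *)

(* Defs.v *)
From HB Require Import structures.
From mathcomp Require Import all_boot all_order all_algebra.
Set Implicit Arguments. Unset Strict Implicit. Unset Printing Implicit Defensive.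
Import GRing.Theory.
Local Open Scope ring_scope.

Section Defs.

Definition is_ideal (R : comPzRingType) (I : R -> Prop) : Prop :=
  [/\ I 0, (forall x y, I x -> I y -> I (x + y)) & (forall r x, I x -> I (r * x))].

Definition is_prime_ideal (R : comPzRingType) (P : R -> Prop) : Prop :=
  [/\ is_ideal P, ~ P 1 & (forall a b, P (a * b) -> P a \/ P b)].

Definition noetherian (R : comPzRingType) : Prop :=
  forall I : R -> Prop, is_ideal I ->
    exists s : seq R, forall x, I x <->
      exists c : nat -> R, x = \sum_(i < size s) c i * s`_i.

Definition fin_gen (R : comPzRingType) (M : lmodType R) : Prop :=
  exists s : seq M, forall m : M,
    exists c : nat -> R, m = \sum_(i < size s) c i *: s`_i.

Definition is_linear (R : comPzRingType) (M N : lmodType R) (h : M -> N) : Prop :=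
  (forall x y, h (x + y) = h x + h y) /\ (forall (r : R) x, h (r *: x) = r *: h x).

Definition is_semilinear (A A' : comPzRingType) (f : {rmorphism A -> A'})
    (M : lmodType A) (N : lmodType A') (h : M -> N) : Prop :=
  (forall x y, h (x + y) = h x + h y) /\ (forall (a : A) x, h (a *: x) = f a *: h x).

Definition free (R : comPzRingType) (N : lmodType R) : Prop :=
  exists (I : eqType) (e : I -> N),
    (forall n : N, exists (r : seq I) (c : I -> R), n = \sum_(i <- r) c i *: e i) /\
    (forall (r : seq I) (c : I -> R), uniq r ->
        \sum_(i <- r) c i *: e i = 0 -> forall i, i \in r -> c i = 0).

(* (M', j) is the base change M (x)_A A' with j m = m (x) 1, characterized
   by the universal property of extension of scalars. *)
Definition is_base_change (A A' : comPzRingType) (f : {rmorphism A -> A'})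
    (M : lmodType A) (M' : lmodType A') (j : M -> M') : Prop :=
  is_semilinear f j /\
  forall (N : lmodType A') (h : M -> N), is_semilinear f h ->
    (exists h' : M' -> N, is_linear h' /\ forall m, h' (j m) = h m) /\
    (forall h1 h2 : M' -> N, is_linear h1 -> is_linear h2 ->
       (forall m, h1 (j m) = h2 (j m)) -> forall x, h1 x = h2 x).

Definition flat (A A' : comPzRingType) (f : {rmorphism A -> A'}) : Prop :=
  forall (N1 N2 : lmodType A) (u : N1 -> N2), is_linear u -> injective u ->
  forall (N1' N2' : lmodType A') (j1 : N1 -> N1') (j2 : N2 -> N2'),
    is_base_change f j1 -> is_base_change f j2 ->
  forall u' : N1' -> N2', is_linear u' -> (forall n, u' (j1 n) = j2 (u n)) ->
    injective u'.

Definition is_localization_at (R B : comPzRingType) (P : R -> Prop)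
    (g : {rmorphism R -> B}) : Prop :=
  [/\ (forall s, ~ P s -> exists b, g s * b = 1),
      (forall b : B, exists a s, ~ P s /\ b * g s = g a)
    & (forall a, g a = 0 -> exists s, ~ P s /\ s * a = 0)].

Definition locally_free (R : comPzRingType) (M : lmodType R) : Prop :=
  forall P : R -> Prop, is_prime_ideal P ->
    exists (B : comPzRingType) (g : {rmorphism R -> B})
           (N : lmodType B) (j : M -> N),
      [/\ is_localization_at P g, is_base_change g j & free N].

Definition dual (A : comPzRingType) (M : lmodType A) := {scalar M}.

(* canonical map M -> M^** ; M^tl is its image *)
Definition bidual_ev (A : comPzRingType) (M : lmodType A) (m : M) :
  dual M -> A := fun g => g m.

End Defs.

(* Main.v *)
Require Import Defs.
From HB Require Import structures.
From mathcomp Require Import all_boot all_order all_algebra.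
From mathcomp Require Import boolp classical_sets.
From mathcomp Require Import ring.
Set Implicit Arguments. Unset Strict Implicit. Unset Printing Implicit Defensive.
Import GRing.Theory.
Local Open Scope ring_scope.
Section Quo.
Variables (T : Type) (E : T -> T -> Prop).
Hypotheses (Erefl : forall x, E x x) (Esym : forall x y, E x y -> E y x)
  (Etrans : forall x y z, E x y -> E y z -> E x z).

Definition quo := {X : T -> Prop | exists x, X = E x}.
Definition cls (x : T) : quo := exist _ (E x) (ex_intro _ x erefl).

Lemma clsE x y : cls x = cls y <-> E x y.
Proof.
split=> [H|H].
  have : proj1_sig (cls x) = proj1_sig (cls y) by rewrite H.
  by move=> /= ->; apply: Erefl.
rewrite /cls; apply: eq_exist_uncurried => /=.
have e : E x = E y.
  apply: funext => z; apply: propext; split => Hz; eauto.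
by exists e; apply: Prop_irrelevance.
Qed.

Lemma cls_surj (q : quo) : exists x, q = cls x.
Proof.
case: q => X [x ex]; exists x; rewrite /cls; apply: eq_exist_uncurried.
by exists ex; apply: Prop_irrelevance.
Qed.

Definition rep (q : quo) : T := projT1 (cid (cls_surj q)).
Lemma repK q : cls (rep q) = q.
Proof. by rewrite /rep; case: cid => x /= ->. Qed.
Lemma rep_cls x : E (rep (cls x)) x.
Proof. by apply/clsE; rewrite repK. Qed.

End Quo.

Inductive ispan (R : pzRingType) (X : lmodType R) (G : X -> Prop) : X -> Prop :=
| isp0 : ispan G 0
| ispG x : G x -> ispan G x
| ispD x y : ispan G x -> ispan G y -> ispan G (x + y)
| ispZ (a : R) x : ispan G x -> ispan G (a *: x).

Lemma ispan_ind_lin (R : pzRingType) (X Y : lmodType R) (G : X -> Prop) (h : X -> Y) :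
  (forall x y, h (x + y) = h x + h y) -> (forall a x, h (a *: x) = a *: h x) ->
  (forall x, G x -> h x = 0) -> forall x, ispan G x -> h x = 0.
Proof.
move=> hD hZ hG x; elim => [|y /hG //|y z _ H1 _ H2|a y _ H].
- by have := hD 0 0; rewrite addr0 => e; apply: (addrI (h 0)); rewrite -e addr0.
- by rewrite hD H1 H2 addr0.
- by rewrite hZ H scaler0.
Qed.

Record submod (R : comPzRingType) (X : lmodType R) := Submod {
  sm :> X -> Prop;
  sm0 : sm 0;
  smD : forall x y, sm x -> sm y -> sm (x + y);
  smZ : forall a x, sm x -> sm (a *: x) }.

Section QMod.
Variables (R : comPzRingType) (X : lmodType R) (S : submod X).
Let S0 := sm0 S.
Let SD := @smD _ _ S.
Let SZ := @smZ _ _ S.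

Lemma SN x : S x -> S (- x).
Proof. by move=> Sx; rewrite -scaleN1r; apply: SZ. Qed.

Definition qrel (x y : X) := S (x - y).
Lemma qrefl x : qrel x x. Proof. by rewrite /qrel subrr. Qed.
Lemma qsym x y : qrel x y -> qrel y x.
Proof. by move=> /SN; rewrite /qrel opprB. Qed.
Lemma qtrans x y z : qrel x y -> qrel y z -> qrel x z.
Proof. by move=> H1 H2; have := SD H1 H2; rewrite /qrel addrA subrK. Qed.

Definition qmod := quo qrel.
HB.instance Definition _ := gen_eqMixin qmod.
HB.instance Definition _ := gen_choiceMixin qmod.

Definition qc (x : X) : qmod := cls qrel x.
Definition qr (q : qmod) : X := rep q.
Lemma qcE x y : qc x = qc y <-> S (x - y).
Proof. exact: clsE qrefl qsym qtrans x y. Qed.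
Lemma qrK q : qc (qr q) = q. Proof. exact: repK. Qed.
Lemma qc_surj q : exists x, q = qc x. Proof. by exists (qr q); rewrite qrK. Qed.
Lemma qrc x : S (qr (qc x) - x).
Proof. by apply/qcE; rewrite qrK. Qed.

Definition qzero := qc 0.
Definition qadd q1 q2 := qc (qr q1 + qr q2).
Definition qopp q := qc (- qr q).
Definition qscale a q := qc (a *: qr q).

Lemma qaddE x y : qadd (qc x) (qc y) = qc (x + y).
Proof.
apply/qcE; have := SD (qrc x) (qrc y).
by rewrite addrACA opprD.
Qed.
Lemma qoppE x : qopp (qc x) = qc (- x).
Proof. by apply/qcE; rewrite -opprD; apply: SN; apply: qrc. Qed.
Lemma qscaleE a x : qscale a (qc x) = qc (a *: x).
Proof. by apply/qcE; rewrite -scalerBr; apply: SZ; apply: qrc. Qed.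

Lemma qaddA : associative qadd.
Proof.
move=> q1 q2 q3; case: (qc_surj q1) (qc_surj q2) (qc_surj q3) => [x1 ->] [x2 ->] [x3 ->].
by rewrite !qaddE addrA.
Qed.
Lemma qaddC : commutative qadd.
Proof.
move=> q1 q2; case: (qc_surj q1) (qc_surj q2) => [x1 ->] [x2 ->].
by rewrite !qaddE addrC.
Qed.
Lemma qadd0 : left_id qzero qadd.
Proof. by move=> q; case: (qc_surj q) => x ->; rewrite /qzero qaddE add0r. Qed.
Lemma qaddN : left_inverse qzero qopp qadd.
Proof. by move=> q; case: (qc_surj q) => x ->; rewrite qoppE qaddE addNr. Qed.

HB.instance Definition _ := GRing.isZmodule.Build qmod qaddA qaddC qadd0 qaddN.
Lemma qcD x y : qc (x + y) = qc x + qc y.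
Proof. exact: (esym (qaddE x y)). Qed.

Lemma qscaleA a b q : qscale a (qscale b q) = qscale (a * b) q.
Proof. by case: (qc_surj q) => x ->; rewrite !qscaleE scalerA. Qed.
Lemma qscale1 : left_id 1 qscale.
Proof. by move=> q; case: (qc_surj q) => x ->; rewrite qscaleE scale1r. Qed.
Lemma qscaleDr : right_distributive qscale +%R.
Proof.
move=> a q1 q2; case: (qc_surj q1) (qc_surj q2) => [x1 ->] [x2 ->].
by rewrite -qcD !qscaleE -qcD scalerDr.
Qed.
Lemma qscaleDl q : {morph qscale^~ q : a b / a + b}.
Proof.
move=> a b; case: (qc_surj q) => x ->.
by rewrite !qscaleE -qcD scalerDl.
Qed.

HB.instance Definition _ := GRing.Zmodule_isLmodule.Build R qmod qscaleA qscale1 qscaleDr qscaleDl.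

Lemma qcZ a x : qc (a *: x) = a *: qc x.
Proof. by rewrite -qscaleE. Qed.
Lemma qc0 x : qc x = 0 <-> S x.
Proof. by have := qcE x 0; rewrite subr0. Qed.

Variables (Y : lmodType R) (al : X -> Y).
Hypotheses (alD : forall x y, al (x + y) = al x + al y)
  (alZ : forall a x, al (a *: x) = a *: al x) (alS : forall x, S x -> al x = 0).

Definition qdesc (q : qmod) := al (qr q).
Lemma alB x y : al (x - y) = al x - al y.
Proof.
have H : al (- y) = - al y.
  by rewrite -scaleN1r alZ scaleN1r.
by rewrite alD H.
Qed.
Lemma qdescE x : qdesc (qc x) = al x.
Proof. by apply/eqP; rewrite -subr_eq0 -alB alS //; apply: qrc. Qed.
Lemma qdesc_lin : is_linear qdesc.
Proof.
split=> [q1 q2|a q]; first case: (qc_surj q1) (qc_surj q2) => [x1 ->] [x2 ->].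
  by rewrite -qcD !qdescE alD.
by case: (qc_surj q) => x ->; rewrite -qcZ !qdescE alZ.
Qed.
End QMod.
Lemma add0_of (U V : zmodType) (h : U -> V) :
  (forall x y, h (x + y) = h x + h y) -> h 0 = 0.
Proof. by move=> hD; have := hD 0 0; rewrite addr0 => e; apply: (addrI (h 0)); rewrite -e addr0. Qed.

Lemma addN_of (U V : zmodType) (h : U -> V) :
  (forall x y, h (x + y) = h x + h y) -> forall x, h (- x) = - h x.
Proof.
move=> hD x; apply: (addrI (h x)); rewrite -hD !subrr; exact: add0_of.
Qed.

Lemma addB_of (U V : zmodType) (h : U -> V) :
  (forall x y, h (x + y) = h x + h y) -> forall x y, h (x - y) = h x - h y.
Proof. by move=> hD x y; rewrite hD (addN_of hD). Qed.

Lemma add_sum (U V : zmodType) (h : U -> V) (hD : forall x y, h (x + y) = h x + h y)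
  (I : Type) (r : seq I) (P : pred I) (F : I -> U) :
  h (\sum_(i <- r | P i) F i) = \sum_(i <- r | P i) h (F i).
Proof. exact: (big_morph h hD (add0_of hD)). Qed.

Section BaseChange.
Variables (A A' : comPzRingType) (f : {rmorphism A -> A'}).

Lemma semi_sum (M : lmodType A) (N : lmodType A') (h : M -> N) :
  is_semilinear f h -> forall I (r : seq I) P (F : I -> M),
  h (\sum_(i <- r | P i) F i) = \sum_(i <- r | P i) h (F i).
Proof. by case=> hD _; exact: add_sum. Qed.

Lemma lin_sum (R : comPzRingType) (M N : lmodType R) (h : M -> N) :
  is_linear h -> forall I (r : seq I) P (F : I -> M),
  h (\sum_(i <- r | P i) F i) = \sum_(i <- r | P i) h (F i).
Proof. by case=> hD _; exact: add_sum. Qed.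

Definition rowext q (N : lmodType A') (h : 'rV[A]_q -> N) :=
  fun w : 'rV[A']_q => \sum_(j < q) w 0 j *: h 'e_j.

Lemma rowext_lin q (N : lmodType A') (h : 'rV[A]_q -> N) : is_linear (rowext h).
Proof.
split=> [x y|a x]; rewrite /rowext.
  by rewrite -big_split /=; apply: eq_bigr => j _; rewrite mxE scalerDl.
by rewrite scaler_sumr; apply: eq_bigr => j _; rewrite mxE scalerA.
Qed.

Lemma rowext_E q (N : lmodType A') (h : 'rV[A]_q -> N) :
  is_semilinear f h -> forall v, rowext h (map_mx f v) = h v.
Proof.
move=> hs v; rewrite /rowext {2}(row_sum_delta v) (semi_sum hs).
by apply: eq_bigr => j _; rewrite mxE; case: hs => _ ->.
Qed.

Lemma rows_uniq q (N : lmodType A') (h1 h2 : 'rV[A']_q -> N) :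
  is_linear h1 -> is_linear h2 ->
  (forall v, h1 (map_mx f v) = h2 (map_mx f v)) -> forall x, h1 x = h2 x.
Proof.
move=> l1 l2 e x; rewrite (row_sum_delta x) (lin_sum l1) (lin_sum l2).
apply: eq_bigr => j _; case: l1 => _ ->; case: l2 => _ ->.
by rewrite -(map_delta_mx f) e.
Qed.

Lemma bc_rows q : is_base_change f (fun v : 'rV[A]_q => map_mx f v).
Proof.
split.
  split=> [x y|a x]; first exact: map_mxD.
  exact: map_mxZ.
move=> N h hs; split.
  by exists (rowext h); split; [exact: rowext_lin | exact: rowext_E].
exact: rows_uniq.
Qed.
End BaseChange.
(* ---------- flatness: kernels commute with base change ---------- *)
Section Flat.
Variables (A A' : comPzRingType) (f : {rmorphism A -> A'}) (p q : nat)
  (al : 'rV[A]_p -> 'rV[A]_q) (al' : 'rV[A']_p -> 'rV[A']_q).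
Hypotheses (alL : is_linear al) (al'L : is_linear al')
  (compat : forall v, al' (map_mx f v) = map_mx f (al v)).

Let mapD (v w : 'rV[A]_p) : map_mx f (v + w) = map_mx f v + map_mx f w.
Proof. exact: map_mxD. Qed.
Let mapZ a (v : 'rV[A]_p) : map_mx f (a *: v) = f a *: map_mx f v.
Proof. exact: map_mxZ. Qed.
Let mapB (v w : 'rV[A]_p) : map_mx f (v - w) = map_mx f v - map_mx f w.
Proof. exact: (addB_of mapD). Qed.
Let map0 n : map_mx f (0 : 'rV[A]_n) = 0.
Proof. by apply/matrixP => i j; rewrite !mxE rmorph0. Qed.

Let al0 : al 0 = 0. Proof. by case: alL => D _; exact: add0_of. Qed.

Lemma V0 : al 0 = 0. Proof. exact: al0. Qed.
Lemma VD x y : al x = 0 -> al y = 0 -> al (x + y) = 0.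
Proof. by case: alL => D _ h1 h2; rewrite D h1 h2 addr0. Qed.
Lemma VZ a x : al x = 0 -> al (a *: x) = 0.
Proof. by case: alL => _ Z h; rewrite Z h scaler0. Qed.

Definition Vsm : submod 'rV[A]_p := Submod V0 VD VZ.

Definition Gp (y : 'rV[A']_p) := exists v, al v = 0 /\ y = map_mx f v.
Definition Wsm : submod 'rV[A']_p := Submod (@isp0 _ _ Gp) (@ispD _ _ Gp) (@ispZ _ _ Gp).

Definition j1 (n : qmod Vsm) : qmod Wsm := qc Wsm (map_mx f (qr n)).

Lemma j1E v : j1 (qc Vsm v) = qc Wsm (map_mx f v).
Proof.
apply/qcE; rewrite -mapB; apply: ispG; exists (qr (qc Vsm v) - v); split => //.
exact: (qrc Vsm v).
Qed.

Lemma bc1 : is_base_change f j1.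
Proof.
split.
  split=> [n1 n2|a n].
    case: (qc_surj n1) (qc_surj n2) => [x1 ->] [x2 ->].
    by rewrite -qcD !j1E mapD qcD.
  by case: (qc_surj n) => x ->; rewrite -qcZ !j1E mapZ qcZ.
move=> N h hs.
pose H := fun v => h (qc Vsm v).
have Hs : is_semilinear f H.
  case: hs => hD hZ; split=> [x y|a x]; rewrite /H; first by rewrite qcD hD.
  by rewrite qcZ hZ.
have H'L := rowext_lin H.
have H'E := rowext_E Hs.
have H'W : forall x, Wsm x -> rowext H x = 0.
  case: H'L => D Z; apply: ispan_ind_lin => // y [v [hv ->]].
  rewrite H'E /H; have -> : qc Vsm v = 0 by apply/qc0.
  by case: hs => hD _; exact: add0_of.
split.
  case: H'L => D Z.
  exists (qdesc (S:=Wsm) (rowext H)); split; first exact: qdesc_lin.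
  move=> n; case: (qc_surj n) => x ->.
  by rewrite j1E (qdescE D Z H'W) H'E.
move=> h1 h2 l1 l2 e x; case: (qc_surj x) => w ->.
have k1 : is_linear (fun w => h1 (qc Wsm w)).
  by case: l1 => D Z; split=> [a b|a b]; rewrite ?qcD ?qcZ ?D ?Z.
have k2 : is_linear (fun w => h2 (qc Wsm w)).
  by case: l2 => D Z; split=> [a b|a b]; rewrite ?qcD ?qcZ ?D ?Z.
apply: (rows_uniq (f:=f) k1 k2) => v /=.
by have := e (qc Vsm v); rewrite j1E.
Qed.

Definition uu (n : qmod Vsm) := al (qr n).

Lemma flat_kernel : flat f -> forall w, al' w = 0 -> ispan Gp w.
Proof.
move=> fl w hw.
case: alL => aD aZ.
have aS : forall x, Vsm x -> al x = 0 by [].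
have uL : is_linear (qdesc (S:=Vsm) al) := qdesc_lin aD aZ aS.
have uinj : injective (qdesc (S:=Vsm) al).
  move=> n1 n2; case: (qc_surj n1) (qc_surj n2) => [x1 ->] [x2 ->].
  rewrite !(qdescE aD aZ aS) => e; apply/qcE => /=.
  by rewrite (addB_of aD) e subrr.
case: al'L => bD bZ.
have bS : forall x, Wsm x -> al' x = 0.
  apply: ispan_ind_lin => // y [v [hv ->]]; by rewrite compat hv map0.
have u'L : is_linear (qdesc (S:=Wsm) al') := qdesc_lin bD bZ bS.
have cmp : forall n, qdesc (S:=Wsm) al' (j1 n) = map_mx f (qdesc (S:=Vsm) al n).
  move=> n; case: (qc_surj n) => x ->.
  by rewrite j1E (qdescE bD bZ bS) (qdescE aD aZ aS) compat.
have inj := fl _ _ _ uL uinj _ _ _ _ bc1 (bc_rows f q) _ u'L cmp.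
have : qc Wsm w = qc Wsm 0.
  apply: inj; rewrite !(qdescE bD bZ bS) hw.
  by case: (conj bD bZ) => _ _; exact: (esym (add0_of bD)).
by move/qcE; rewrite subr0.
Qed.
End Flat.
Section FVec.
Variable (A : comPzRingType).
Definition fvec := nat -> A.
HB.instance Definition _ := gen_eqMixin fvec.
HB.instance Definition _ := gen_choiceMixin fvec.
Definition fv0 : fvec := fun _ => 0.
Definition fvadd (x y : fvec) : fvec := fun i => x i + y i.
Definition fvopp (x : fvec) : fvec := fun i => - x i.
Definition fvscale (a : A) (x : fvec) : fvec := fun i => a * x i.
Lemma fvaddA : associative fvadd.
Proof. by move=> x y z; apply: funext => i; rewrite /fvadd addrA. Qed.
Lemma fvaddC : commutative fvadd.
Proof. by move=> x y; apply: funext => i; rewrite /fvadd addrC. Qed.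
Lemma fvadd0 : left_id fv0 fvadd.
Proof. by move=> x; apply: funext => i; rewrite /fvadd add0r. Qed.
Lemma fvaddN : left_inverse fv0 fvopp fvadd.
Proof. by move=> x; apply: funext => i; rewrite /fvadd /fvopp addNr. Qed.
HB.instance Definition _ := GRing.isZmodule.Build fvec fvaddA fvaddC fvadd0 fvaddN.
Lemma fvscaleA a b x : fvscale a (fvscale b x) = fvscale (a * b) x.
Proof. by apply: funext => i; rewrite /fvscale mulrA. Qed.
Lemma fvscale1 : left_id 1 fvscale.
Proof. by move=> x; apply: funext => i; rewrite /fvscale mul1r. Qed.
Lemma fvscaleDr : right_distributive fvscale +%R.
Proof. by move=> a x y; apply: funext => i; rewrite /fvscale /= /fvadd mulrDr. Qed.
Lemma fvscaleDl x : {morph fvscale^~ x : a b / a + b}.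
Proof. by move=> a b; apply: funext => i; rewrite /fvscale /= /fvadd mulrDl. Qed.
HB.instance Definition _ := GRing.Zmodule_isLmodule.Build A fvec fvscaleA fvscale1 fvscaleDr fvscaleDl.

Lemma fvE_add (x y : fvec) i : (x + y) i = x i + y i. Proof. by []. Qed.
Lemma fvE_scale a (x : fvec) i : (a *: x) i = a * x i. Proof. by []. Qed.
Lemma fvE_0 i : (0 : fvec) i = 0. Proof. by []. Qed.
Lemma fvE_opp (x : fvec) i : (- x) i = - x i. Proof. by []. Qed.
Lemma fvE_sum I (r : seq I) (P : pred I) (F : I -> fvec) i :
  (\sum_(k <- r | P k) F k) i = \sum_(k <- r | P k) F k i.
Proof. exact: (big_morph (fun v : fvec => v i) (fun x y => fvE_add x y i) (fvE_0 i)). Qed.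
End FVec.

Lemma sm_sum (R : comPzRingType) (X : lmodType R) (S : submod X) I (r : seq I) (P : pred I) F :
  (forall k, P k -> S (F k)) -> S (\sum_(k <- r | P k) F k).
Proof. by move=> H; apply: big_ind => //; [exact: sm0 | exact: smD]. Qed.

Lemma ispan_sum (R : pzRingType) (X : lmodType R) (G : X -> Prop) I (r : seq I) (P : pred I) F :
  (forall k, P k -> ispan G (F k)) -> ispan G (\sum_(k <- r | P k) F k).
Proof. by move=> H; apply: big_ind => //; [exact: isp0 | exact: ispD]. Qed.

Lemma ispan_mono (R : pzRingType) (X : lmodType R) (G G' : X -> Prop) x :
  (forall y, G y -> G' y) -> ispan G x -> ispan G' x.
Proof.
move=> H; elim=> [|y /H|y z _ H1 _ H2|a y _ H1]; by constructor.
Qed.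

Lemma sum_delta (A : comPzRingType) (t : seq A) (k : nat) : (k < size t)%N ->
  t`_k = \sum_(i < size t) (if (i : nat) == k then 1 else 0) * t`_i.
Proof.
move=> Hk; rewrite (bigD1 (Ordinal Hk)) //= eqxx mul1r big1 ?addr0 // => i.
by rewrite -val_eqE /= => /negPf ->; rewrite mul0r.
Qed.

Section Noeth.
Variables (A : comPzRingType) (HA : noetherian A).

Lemma noeth_sub n (S : submod (fvec A)) :
  (forall v, S v -> forall i, (n <= i)%N -> v i = 0) ->
  exists G : seq (fvec A), (forall g, g \in G -> S g) /\
     forall v, S v -> ispan (fun g => g \in G) v.
Proof.
elim: n S => [|n IH] S supp.
  exists [::]; split => // v Sv.
  have -> : v = 0 by apply: funext => i; rewrite supp.
  exact: isp0.
pose I a := exists v, S v /\ v n = a.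
have Iid : is_ideal I.
  split; first by exists 0; split; [exact: sm0|].
    by move=> x y [v [Sv <-]] [w [Sw <-]]; exists (v + w); split; [exact: smD|].
  by move=> r x [v [Sv <-]]; exists (r *: v); split; [exact: smZ|].
have [t Ht] := HA Iid.
have Ut : forall x, exists u : fvec A, I x -> S u /\ u n = x.
  move=> x; case: (lem (I x)) => [[u hu]|nI]; first by exists u.
  by exists 0.
have [U HU] := choice Ut.
have tI : forall k, (k < size t)%N -> I t`_k.
  move=> k hk; apply/Ht; exists (fun i => if i == k then 1 else 0).
  exact: sum_delta.
have S0lem : forall v, S v /\ v n = 0 -> forall i, (n <= i)%N -> v i = 0.
  move=> v [Sv vn] i; rewrite leq_eqVlt => /orP[/eqP <- //|hi].
  exact: supp.
have e0 : S 0 /\ (0 : fvec A) n = 0 by split; [exact: sm0|].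
have eD : forall x y : fvec A, S x /\ x n = 0 -> S y /\ y n = 0 -> S (x + y) /\ (x + y) n = 0.
  by move=> x y [hx hx'] [hy hy']; split; [exact: smD|rewrite fvE_add hx' hy' addr0].
have eZ : forall a (x : fvec A), S x /\ x n = 0 -> S (a *: x) /\ (a *: x) n = 0.
  by move=> a x [hx hx']; split; [exact: smZ|rewrite fvE_scale hx' mulr0].
pose S' := @Submod _ (fvec A) (fun v => S v /\ v n = 0) e0 eD eZ.
have [G0 [G0S G0span]] := IH S' S0lem.
pose us := [seq U (t`_k) | k <- iota 0 (size t)].
exists (G0 ++ us); split.
  move=> g; rewrite mem_cat => /orP[/G0S [] //|/mapP [k]].
  by rewrite mem_iota add0n => /andP[_ hk] ->; case: (HU _ (tI _ hk)).
move=> v Sv.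
have hI : I (v n) by exists v.
have [c hc] := proj1 (Ht (v n)) hI.
pose z := \sum_(k < size t) c k *: U t`_k.
have Sz : S z by apply: sm_sum => k _; apply: smZ; case: (HU _ (tI _ (ltn_ord k))).
have zn : z n = v n.
  rewrite /z fvE_sum hc; apply: eq_bigr => k _.
  by rewrite fvE_scale; case: (HU _ (tI _ (ltn_ord k))) => _ ->.
have -> : v = (v - z) + z by rewrite subrK.
apply: ispD.
  apply: (ispan_mono (G := fun g => g \in G0)).
    by move=> y hy; rewrite mem_cat hy.
  apply: G0span; split; first by apply: smD => //; rewrite -scaleN1r; apply: smZ.
  by rewrite fvE_add fvE_opp zn subrr.
apply: ispan_sum => k _; apply: ispZ; apply: ispG.
rewrite mem_cat; apply/orP; right; apply/mapP; exists (nat_of_ord k) => //.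
by rewrite mem_iota add0n ltn_ord.
Qed.
End Noeth.
Lemma sum_pick1 (V : nmodType) (I : eqType) (u : seq I) (k : I) (G : I -> V) :
  uniq u -> k \in u -> \sum_(i <- u) (if k == i then G i else 0) = G k.
Proof.
move=> uu ku; rewrite (bigD1_seq k) //= eqxx big1 ?addr0 // => i.
by rewrite eq_sym => /negPf ->.
Qed.


Section Free.
Variables (B : comPzRingType) (N : lmodType B) (I : eqType) (e : I -> N).

Definition comb (l : seq (I * B)) : N := \sum_(p <- l) p.2 *: e p.1.
Definition coef (l : seq (I * B)) (i : I) : B := \sum_(p <- l | p.1 == i) p.2.

Lemma comb_regroup l (u : seq I) : uniq u -> (forall p, p \in l -> p.1 \in u) ->
  comb l = \sum_(i <- u) coef l i *: e i.
Proof.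
move=> uu hl; rewrite /comb /coef.
under [RHS]eq_bigr => i _ do rewrite scaler_suml big_mkcond /=.
rewrite exchange_big /= big_seq_cond [RHS]big_seq_cond; apply: eq_bigr => p /andP[pl _].
rewrite (sum_pick1 (fun i => p.2 *: e i) uu (hl _ pl)) //.
Qed.

Hypotheses (espan : forall n : N, exists (r : seq I) (c : I -> B), n = \sum_(i <- r) c i *: e i)
  (eind : forall (r : seq I) (c : I -> B), uniq r ->
        \sum_(i <- r) c i *: e i = 0 -> forall i, i \in r -> c i = 0).

Lemma rep_ex n : exists l, n = comb l.
Proof.
have [r [c ->]] := espan n; exists [seq (k, c k) | k <- r].
by rewrite /comb big_map.
Qed.

Lemma coef_out l i : (forall p, p \in l -> p.1 != i) -> coef l i = 0.
Proof.
move=> h; rewrite /coef big_seq_cond big1 // => p /andP[pl /eqP pe].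
by move: (h p pl); rewrite pe eqxx.
Qed.

Lemma coef_uniq l1 l2 : comb l1 = comb l2 -> forall i, coef l1 i = coef l2 i.
Proof.
move=> E i.
pose u := undup [seq p.1 | p <- l1 ++ l2].
have uu : uniq u by exact: undup_uniq.
have h1 : forall p, p \in l1 -> p.1 \in u.
  by move=> p pl; rewrite mem_undup; apply: map_f; rewrite mem_cat pl.
have h2 : forall p, p \in l2 -> p.1 \in u.
  by move=> p pl; rewrite mem_undup; apply: map_f; rewrite mem_cat pl orbT.
have Z : \sum_(k <- u) (coef l1 k - coef l2 k) *: e k = 0.
  under eq_bigr => k _ do rewrite scalerBl.
  by rewrite sumrB -comb_regroup // -comb_regroup // E subrr.
case: (boolP (i \in u)) => iu.
  by apply/eqP; rewrite -subr_eq0; apply/eqP; exact: (eind uu Z iu).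
rewrite !coef_out // => p pl; apply: contraNneq iu => <-; [exact: h2|exact: h1].
Qed.

Definition crep (n : N) := projT1 (cid (rep_ex n)).
Lemma crepK n : n = comb (crep n).
Proof. by rewrite /crep; case: cid. Qed.
Definition phi (i : I) (n : N) : B^o := coef (crep n) i.

Lemma phi_lin i : is_linear (phi i).
Proof.
split=> [x y|a x]; rewrite /phi.
  rewrite (@coef_uniq _ (crep x ++ crep y)); first by rewrite /coef big_cat.
  have cb : forall l1 l2, comb (l1 ++ l2) = comb l1 + comb l2.
    by move=> l1 l2; rewrite /comb big_cat.
  by rewrite cb -!crepK.
rewrite (@coef_uniq _ [seq (p.1, a * p.2) | p <- crep x]).
  by rewrite /coef big_map scaler_sumr.
have cm : comb [seq (p.1, a * p.2) | p <- crep x] = a *: comb (crep x).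
  rewrite /comb big_map scaler_sumr.
  by apply: eq_bigr => p _; rewrite scalerA.
by rewrite cm -!crepK.
Qed.

Lemma phi_sep n : (forall i, phi i n = 0) -> n = 0.
Proof.
move=> h; rewrite (crepK n) (@comb_regroup _ (undup [seq p.1 | p <- crep n])).
- by rewrite big1 // => i _; rewrite -/(phi i n) h scale0r.
- exact: undup_uniq.
by move=> p pl; rewrite mem_undup map_f.
Qed.
End Free.

Lemma free_sep (B : comPzRingType) (N : lmodType B) : Defs.free N ->
  forall n, (forall phi : N -> B^o, is_linear phi -> phi n = 0) -> n = 0.
Proof.
case=> I [e [sp ind]] n h; apply: (@phi_sep B N I e sp) => i.
exact: h (phi_lin sp ind i).
Qed.
Section Prime.
Variables (R : comPzRingType) (J : R -> Prop).
Hypotheses (Jid : is_ideal J) (J1 : ~ J 1).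

Definition PT := {I : R -> Prop | [/\ is_ideal I, ~ I 1 & forall x, J x -> I x]}.
Definition PRl (I1 I2 : PT) : bool := `[< forall x, sval I1 x -> sval I2 x >].

Lemma exists_prime : exists P, is_prime_ideal P /\ forall x, J x -> P x.
Proof.
have t0 : PT by exists J; split.
have r1 : forall I, PRl I I by move=> I; apply/asboolP.
have r2 : forall a b c, PRl a b -> PRl b c -> PRl a c.
  by move=> a b c /asboolP h1 /asboolP h2; apply/asboolP => x /h1 /h2.
have r3 : forall C : set PT, total_on C (fun x y => PRl x y) -> exists t, forall s, C s -> PRl s t.
  move=> C Ctot.
  pose U x := J x \/ exists I, C I /\ sval I x.
  have Uid : is_ideal U.
    case: Jid => J0 JD JZ.
    split; first by left.
      move=> x y [Jx|[I [CI Ix]]] [Jy|[I' [CI' I'y]]].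
      + by left; apply: JD.
      + right; exists I'; split => //; case: (svalP I') => [[_ D _]] _ JI.
        by apply: D => //; apply: JI.
      + right; exists I; split => //; case: (svalP I) => [[_ D _]] _ JI.
        by apply: D => //; apply: JI.
      + case: (Ctot _ _ CI CI') => /asboolP h.
          right; exists I'; split => //; case: (svalP I') => [[_ D _]] _ JI.
          by apply: D => //; apply: h.
        right; exists I; split => //; case: (svalP I) => [[_ D _]] _ JI.
        by apply: D => //; apply: h.
    move=> r x [Jx|[I [CI Ix]]]; first by left; apply: JZ.
    by right; exists I; split => //; case: (svalP I) => [[_ _ Z]] _ _; apply: Z.
  have U1 : ~ U 1.
    by case=> [//|[I [_ I1]]]; case: (svalP I) => _ /(_ I1).
  exists (exist _ U (And3 Uid U1 (fun x Jx => or_introl Jx))).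
  by move=> s Cs; apply/asboolP => x sx /=; right; exists s.
have [t tmax] := @ZL_preorder PT t0 PRl r1 r2 r3.
case: (svalP t) => Pid P1 JP.
exists (sval t); split => //; split => // a b Pab.
case: (lem (sval t a)) => Pa; [by left|right].
pose Q x := exists p r, sval t p /\ x = p + r * a.
case: Pid => P0 PD PZ.
case: (lem (Q 1)) => [[p [r [Pp e]]]|Q1].
  have -> : b = b * p + r * (a * b).
    by rewrite [b * p]mulrC mulrA -mulrDl -e mul1r.
  by apply: PD; apply: PZ.
have Qid : is_ideal Q.
  split; first by exists 0, 0; rewrite mul0r addr0.
    move=> x y [p [r [Pp ->]]] [p' [r' [Pp' ->]]].
    exists (p + p'), (r + r'); split; first exact: PD.
    by rewrite mulrDl addrACA.
  move=> r x [p [r' [Pp ->]]]; exists (r * p), (r * r'); split; first exact: PZ.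
  by rewrite mulrDr mulrA.
have QJ : forall x, J x -> Q x by move=> x Jx; exists x, 0; rewrite mul0r addr0; split => //; apply: JP.
have := tmax (exist _ Q (And3 Qid Q1 QJ)).
have tQ : PRl t (exist _ Q (And3 Qid Q1 QJ)).
  by apply/asboolP => x Px /=; exists x, 0; rewrite mul0r addr0.
move=> /(_ tQ) /asboolP /(_ a) /= h; exfalso; apply: Pa; apply: h.
by exists 0, 1; rewrite add0r mul1r; split.
Qed.
End Prime.
Record locdat (R B : comPzRingType) := LocDat {
  ld_P : R -> Prop;
  ld_g : {rmorphism R -> B};
  ld_prime : is_prime_ideal ld_P;
  ld_loc : is_localization_at ld_P ld_g }.

Section Frac.
Variables (R B : comPzRingType) (D : locdat R B) (X : lmodType R).
Let P := ld_P D.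
Let g := ld_g D.

Lemma nP1 : ~ P 1. Proof. by case: (ld_prime D). Qed.
Lemma nPM s t : ~ P s -> ~ P t -> ~ P (s * t).
Proof. by case: (ld_prime D) => _ _ H ns nt /H []. Qed.

Definition Sd := {s : R | ~ P s}.
Definition sd1 : Sd := exist _ 1 nP1.
Definition sdM (s t : Sd) : Sd := exist _ (sval s * sval t) (nPM (svalP s) (svalP t)).

Definition FE (p q : X * Sd) := exists u, ~ P u /\ (u * sval q.2) *: p.1 = (u * sval p.2) *: q.1.

Lemma FE_refl p : FE p p. Proof. by exists 1; split => //; exact: nP1. Qed.
Lemma FE_sym p q : FE p q -> FE q p. Proof. by case=> u [nu e]; exists u. Qed.
Lemma FE_trans p q r : FE p q -> FE q r -> FE p r.
Proof.
case: p q r => [x s] [y t] [z w] [u [nu e1]] [v [nv e2]]; simpl in *.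
exists (u * v * sval t); split; first exact: (nPM (nPM nu nv) (svalP t)).
have -> : (u * v * sval t * sval w) *: x = (v * sval w) *: ((u * sval t) *: x).
  by rewrite scalerA; congr (_ *: _); ring.
rewrite e1 scalerA.
have -> : (u * v * sval t * sval s) *: z = (u * sval s) *: ((v * sval t) *: z).
  by rewrite scalerA; congr (_ *: _); ring.
rewrite -e2 scalerA; congr (_ *: _); ring.
Qed.

Definition Lq := quo FE.
HB.instance Definition _ := gen_eqMixin Lq.
HB.instance Definition _ := gen_choiceMixin Lq.

Definition fc (x : X) (s : Sd) : Lq := cls FE (x, s).
Definition fr (q : Lq) : X * Sd := rep q.
Lemma frK q : fc (fr q).1 (fr q).2 = q.
Proof. by rewrite /fc /fr -surjective_pairing repK. Qed.
Lemma fc_surj q : exists x s, q = fc x s.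
Proof. by exists (fr q).1, (fr q).2; rewrite frK. Qed.
Lemma fcE x s y t : fc x s = fc y t <-> FE (x, s) (y, t).
Proof. exact: (clsE FE_refl FE_sym FE_trans). Qed.
Lemma fc_eq x s y t : sval t *: x = sval s *: y -> fc x s = fc y t.
Proof. by move=> e; apply/fcE; exists 1; split; [exact: nP1|rewrite /= !mul1r]. Qed.
Lemma fr_fc x s : FE (fr (fc x s)) (x, s).
Proof. by rewrite [fr _]surjective_pairing; apply/fcE; rewrite frK. Qed.

Definition fadd (q1 q2 : Lq) :=
  fc (sval (fr q2).2 *: (fr q1).1 + sval (fr q1).2 *: (fr q2).1) (sdM (fr q1).2 (fr q2).2).

Lemma fadd_compat x s x' s' y t y' t' : FE (x, s) (x', s') -> FE (y, t) (y', t') ->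
  fc (sval t *: x + sval s *: y) (sdM s t) = fc (sval t' *: x' + sval s' *: y') (sdM s' t').
Proof.
move=> [u [nu e1]] [v [nv e2]]; simpl in *; apply/fcE; exists (u * v).
split; first exact: nPM. rewrite /=.
have -> : (u * v * (sval s' * sval t')) *: (sval t *: x + sval s *: y) =
   (v * sval t * sval t') *: ((u * sval s') *: x) + (u * sval s * sval s') *: ((v * sval t') *: y).
  by rewrite scalerDr !scalerA; congr (_ *: _ + _ *: _); ring.
rewrite e1 e2 !scalerA scalerDr !scalerA; congr (_ *: _ + _ *: _); ring.
Qed.

Lemma faddE x s y t : fadd (fc x s) (fc y t) = fc (sval t *: x + sval s *: y) (sdM s t).
Proof.
rewrite /fadd; apply: fadd_compat; rewrite -surjective_pairing; exact: fr_fc.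
Qed.

Definition fopp (q : Lq) := fc (- (fr q).1) (fr q).2.
Lemma foppE x s : fopp (fc x s) = fc (- x) s.
Proof.
rewrite /fopp; have [u [nu e]] := fr_fc x s; apply/fcE; exists u; split => //=.
by rewrite !scalerN e.
Qed.

Definition fzero := fc 0 sd1.

Lemma faddA : associative fadd.
Proof.
move=> q1 q2 q3; case: (fc_surj q1) (fc_surj q2) (fc_surj q3) => [x [s ->]] [y [t ->]] [z [w ->]].
rewrite !faddE; apply: fc_eq => /=.
rewrite !scalerDr !scalerA !addrA; congr (_ *: _ + _ *: _ + _ *: _); ring.
Qed.
Lemma faddC : commutative fadd.
Proof.
move=> q1 q2; case: (fc_surj q1) (fc_surj q2) => [x [s ->]] [y [t ->]].
rewrite !faddE; apply: fc_eq => /=.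
by rewrite addrC mulrC.
Qed.
Lemma fadd0 : left_id fzero fadd.
Proof.
move=> q; case: (fc_surj q) => x [s ->]; rewrite /fzero faddE; apply: fc_eq => /=.
by rewrite scaler0 add0r !scale1r mul1r.
Qed.
Lemma faddN : left_inverse fzero fopp fadd.
Proof.
move=> q; case: (fc_surj q) => x [s ->]; rewrite foppE faddE /fzero; apply: fc_eq => /=.
by rewrite scaler0 scalerN addNr scaler0.
Qed.
HB.instance Definition _ := GRing.isZmodule.Build Lq faddA faddC fadd0 faddN.

Lemma fcD x s y t : fc x s + fc y t = fc (sval t *: x + sval s *: y) (sdM s t).
Proof. exact: faddE. Qed.

Lemma loc2 (b : B) : exists p : R * Sd, b * g (sval p.2) = g p.1.
Proof.
have [_ H _] := ld_loc D; have [a [s [ns e]]] := H b.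
by exists (a, exist _ s ns).
Qed.
Definition frac_of (b : B) : R * Sd := projT1 (cid (loc2 b)).
Lemma frac_ofP b : b * g (sval (frac_of b).2) = g (frac_of b).1.
Proof. by rewrite /frac_of; case: cid. Qed.

Definition fscale (b : B) (q : Lq) :=
  fc ((frac_of b).1 *: (fr q).1) (sdM (frac_of b).2 (fr q).2).

Lemma fscale_any b a t x s : b * g (sval t) = g a ->
  fscale b (fc x s) = fc (a *: x) (sdM t s).
Proof.
move=> e; rewrite /fscale.
set a0 := (frac_of b).1; set t0 := (frac_of b).2.
have e0 : b * g (sval t0) = g a0 by exact: frac_ofP.
have [u [nu eu]] := fr_fc x s.
have [_ _ H3] := ld_loc D.
have hz : g (a0 * sval t - a * sval t0) = 0.
  by rewrite rmorphB !rmorphM -e -e0; ring.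
have [w [nw ew]] := H3 _ hz.
apply/fcE; exists (w * u); split; first exact: nPM.
rewrite /=.
set x0 := (fr (fc x s)).1; set s0 := (fr (fc x s)).2.
have ew' : (w * (a0 * sval t)) = (w * (a * sval t0)).
  by apply/eqP; rewrite -subr_eq0 -mulrBr ew.
have -> : (w * u * (sval t * sval s)) *: (a0 *: x0) = (w * (a0 * sval t)) *: ((u * sval s) *: x0).
  by rewrite !scalerA; congr (_ *: _); ring.
rewrite ew' eu !scalerA; congr (_ *: _); ring.
Qed.

Lemma fscaleA a b q : fscale a (fscale b q) = fscale (a * b) q.
Proof.
case: (fc_surj q) => x [s ->].
rewrite (fscale_any _ _ (frac_ofP b)) (fscale_any _ _ (frac_ofP a)).
have e : a * b * g (sval (sdM (frac_of a).2 (frac_of b).2)) = g ((frac_of a).1 * (frac_of b).1).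
  by rewrite /= !rmorphM -frac_ofP -frac_ofP; ring.
rewrite (fscale_any _ _ e); apply: fc_eq => /=; rewrite !scalerA; congr (_ *: _); ring.
Qed.
Lemma fscale1 : left_id 1 fscale.
Proof.
move=> q; case: (fc_surj q) => x [s ->].
have e : 1 * g (sval sd1) = g 1 by rewrite mul1r.
by rewrite (fscale_any _ _ e); apply: fc_eq => /=; rewrite scale1r mul1r.
Qed.
Lemma fscaleDr : right_distributive fscale +%R.
Proof.
move=> b q1 q2; case: (fc_surj q1) (fc_surj q2) => [x [s ->]] [y [t ->]].
rewrite fcD !(fscale_any _ _ (frac_ofP b)) fcD; apply: fc_eq => /=.
rewrite !scalerDr !scalerA; congr (_ *: _ + _ *: _); ring.
Qed.
Lemma fscaleDl q : {morph fscale^~ q : a b / a + b}.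
Proof.
move=> a b; case: (fc_surj q) => x [s ->].
set pa := frac_of a; set pb := frac_of b.
have e : (a + b) * g (sval (sdM pa.2 pb.2)) = g (pa.1 * sval pb.2 + pb.1 * sval pa.2).
  by rewrite /= rmorphD !rmorphM -!frac_ofP; ring.
rewrite (fscale_any _ _ e) !(fscale_any _ _ (frac_ofP _)) -/pa -/pb fcD; apply: fc_eq => /=.
rewrite !scalerDr !scalerA -scalerDl; congr (_ *: _); ring.
Qed.
HB.instance Definition _ := GRing.Zmodule_isLmodule.Build B Lq fscaleA fscale1 fscaleDr fscaleDl.

Definition lam (x : X) : Lq := fc x sd1.
Lemma lam_semi : is_semilinear g lam.
Proof.
split=> [x y|a x].
  by rewrite /lam fcD; apply: fc_eq; rewrite /= !mul1r !scale1r.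
have e : g a * g (sval sd1) = g a by rewrite rmorph1 mulr1.
rewrite /lam; change (fc (a *: x) sd1 = fscale (g a) (fc x sd1)).
by rewrite (fscale_any _ _ e); apply: fc_eq => /=; rewrite mul1r.
Qed.
Lemma lam0 x : lam x = 0 -> exists s, ~ P s /\ s *: x = 0.
Proof.
move=> /fcE [u [nu e]]; exists u; split => //; move: e => /=.
by rewrite !mulr1 scaler0.
Qed.
End Frac.

Lemma loc_kill (R B : comPzRingType) (D : locdat R B) (X : lmodType R) (N : lmodType B)
  (j : X -> N) : is_base_change (ld_g D) j ->
  forall x, j x = 0 -> exists s, ~ ld_P D s /\ s *: x = 0.
Proof.
case=> _ U x jx.
have [[h [hl hE]] _] := U _ _ (lam_semi D X).
apply: lam0; rewrite -hE jx.
by case: hl => hD _; exact: add0_of.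
Qed.
Section MkS.
Variables (A : comPzRingType) (M : lmodType A) (gf : M -> A).
Hypotheses (gD : forall x y, gf (x + y) = gf x + gf y) (gZ : forall a x, gf (a *: x) = a * gf x).
Lemma gf_lin : GRing.linear_for *%R gf.
Proof. by move=> a u v; rewrite gD gZ. Qed.
HB.instance Definition _ := GRing.isLinear.Build A M A *%R gf gf_lin.
Definition mkscalar : {scalar M} := gf.
End MkS.

Section Den.
Variables (A' B : comPzRingType) (D : locdat A' B).
Let P := ld_P D.
Let g := ld_g D.

Lemma common_den n (b : nat -> B) :
  exists sg, ~ P sg /\ exists w : nat -> A', forall i, (i < n)%N -> g (w i) = g sg * b i.
Proof.
elim: n => [|n [sg [nsg [w hw]]]].
  by exists 1; split; [exact: nP1|exists (fun _ => 0)].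
have [_ H _] := ld_loc D; have [a [t [nt e]]] := H (b n).
exists (sg * t); split; first exact: nPM.
exists (fun i => if (i < n)%N then w i * t else a * sg) => i; rewrite ltnS leq_eqVlt.
case/orP => [/eqP ->|hi]; first by rewrite ltnn !rmorphM -e; ring.
by rewrite hi !rmorphM hw //; ring.
Qed.

Lemma common_kill q (F : nat -> A') :
  (forall j, (j < q)%N -> exists t, ~ P t /\ t * F j = 0) ->
  exists tau, ~ P tau /\ forall j, (j < q)%N -> tau * F j = 0.
Proof.
elim: q => [|q IH] H.
  by exists 1; split => //; exact: nP1.
have [tau [ntau htau]] : exists tau, ~ P tau /\ forall j, (j < q)%N -> tau * F j = 0.
  by apply: IH => j hj; apply: H; apply: ltnW.
have [t [nt ht]] := H q (ltnSn q).
exists (tau * t); split; first exact: nPM.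
move=> j; rewrite ltnS leq_eqVlt => /orP[/eqP ->|hj].
  by rewrite -mulrA ht mulr0.
by rewrite mulrAC htau // mul0r.
Qed.
End Den.
Section Key.
Variables (A A' B : comPzRingType) (f : {rmorphism A -> A'}) (M : lmodType A) (D : locdat A' B).
Hypotheses (HA : noetherian A) (fgM : fin_gen M) (fl : flat f).
Let P := ld_P D.
Let g := ld_g D.
Variables (m1 m2 : M).
Hypothesis (Hsc : forall phi : {scalar M}, phi m1 = phi m2).
Variables (h : M -> B).
Hypotheses (hD : forall x y, h (x + y) = h x + h y) (hZ : forall a x, h (a *: x) = g (f a) * h x).

Lemma key : h m1 = h m2.
Proof.
case: fgM => s hs.
set p := size s.
pose pi (c : fvec A) : M := \sum_(i < p) c i *: s`_i.
have piD : forall c d, pi (c + d) = pi c + pi d.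
  by move=> c d; rewrite /pi -big_split; apply: eq_bigr => i _; rewrite fvE_add scalerDl.
have piZ : forall a c, pi (a *: c) = a *: pi c.
  by move=> a c; rewrite /pi scaler_sumr; apply: eq_bigr => i _; rewrite fvE_scale scalerA.
have piB := addB_of piD.
pose tr (c : fvec A) : fvec A := fun i => if (i < p)%N then c i else 0.
have pitr : forall c, pi (tr c) = pi c.
  by move=> c; rewrite /pi; apply: eq_bigr => i _; rewrite /tr ltn_ord.
pose RR (c : fvec A) := pi c = 0 /\ forall i, (p <= i)%N -> c i = 0.
have R0 : RR 0 by split; [exact: (add0_of piD)|].
have RD : forall x y, RR x -> RR y -> RR (x + y).
  move=> x y [px sx] [py sy]; split; first by rewrite piD px py addr0.
  by move=> i hi; rewrite fvE_add sx // sy // addr0.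
have RZ : forall a x, RR x -> RR (a *: x).
  move=> a x [px sx]; split; first by rewrite piZ px scaler0.
  by move=> i hi; rewrite fvE_scale sx // mulr0.
pose Rsm := @Submod _ (fvec A) RR R0 RD RZ.
have [rs [rsR rsspan]] := @noeth_sub A HA p Rsm (fun v hv => hv.2).
set q := size rs.
pose dot (v : 'rV[A]_p) (c : fvec A) : A := \sum_(i < p) v 0 i * c i.
have dotD : forall v c d, dot v (c + d) = dot v c + dot v d.
  by move=> v c d; rewrite /dot -big_split; apply: eq_bigr => i _; rewrite fvE_add mulrDr.
have dotZ : forall v a c, dot v (a *: c) = a * dot v c.
  by move=> v a c; rewrite /dot mulr_sumr; apply: eq_bigr => i _; rewrite fvE_scale mulrCA.
have dottr : forall v c, dot v (tr c) = dot v c.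
  by move=> v c; apply: eq_bigr => i _; rewrite /tr ltn_ord.
pose al (v : 'rV[A]_p) : 'rV[A]_q := \row_(j < q) dot v rs`_j.
pose al' (w : 'rV[A']_p) : 'rV[A']_q := \row_(j < q) \sum_(i < p) w 0 i * f (rs`_j i).
have alL : is_linear al.
  split=> [x y|a x]; apply/rowP => j; rewrite !mxE.
    by rewrite /dot -big_split; apply: eq_bigr => i _; rewrite !mxE mulrDl.
  by rewrite /dot mulr_sumr; apply: eq_bigr => i _; rewrite !mxE mulrA.
have al'L : is_linear al'.
  split=> [x y|a x]; apply/rowP => j; rewrite !mxE.
    by rewrite -big_split; apply: eq_bigr => i _; rewrite !mxE mulrDl.
  by rewrite mulr_sumr; apply: eq_bigr => i _; rewrite !mxE mulrA.
have compat : forall v, al' (map_mx f v) = map_mx f (al v).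
  move=> v; apply/rowP => j; rewrite !mxE rmorph_sum; apply: eq_bigr => i _.
  by rewrite !mxE rmorphM.
have kerdot : forall v, al v = 0 -> forall c, RR c -> dot v c = 0.
  move=> v hv c /rsspan hc.
  have dl : forall x y, (dot v (x + y) : A^o) = dot v x + dot v y by move=> x y; apply: dotD.
  have dz : forall a x, (dot v (a *: x) : A^o) = a *: (dot v x : A^o) by move=> a x; apply: dotZ.
  apply: (ispan_ind_lin (Y := A^o) dl dz _ hc) => r /(nthP 0) [j hj <-].
  by have := congr1 (fun w : 'rV[A]_q => w 0 (Ordinal hj)) hv; rewrite !mxE.
have cm_ex : forall m, exists c : fvec A, m = pi c.
  by move=> m; have [c hc] := hs m; exists c.
have [cm hcm] := choice cm_ex.
pose gf (v : 'rV[A]_p) (m : M) : A := dot v (cm m).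
have gf_pi : forall v, al v = 0 -> forall c, gf v (pi c) = dot v c.
  move=> v hv c; apply/eqP; rewrite -subr_eq0 -(addB_of (dotD v)) -dottr.
  apply/eqP; apply: kerdot => //; split.
    by rewrite pitr piB -hcm subrr.
  by move=> i hi; rewrite /tr ltnNge hi.
have gfD : forall v, al v = 0 -> forall x y, gf v (x + y) = gf v x + gf v y.
  by move=> v hv x y; rewrite {1}(hcm x) {1}(hcm y) -piD gf_pi // dotD.
have gfZ : forall v, al v = 0 -> forall a x, gf v (a *: x) = a * gf v x.
  by move=> v hv a x; rewrite {1}(hcm x) -piZ gf_pi // dotZ.
have gfeq : forall v, al v = 0 -> gf v m1 = gf v m2.
  by move=> v hv; exact: (Hsc (mkscalar (gfD v hv) (gfZ v hv))).
have [sg [nsg [w hw]]] := common_den D p (fun i => h s`_i).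
have hpi : forall c, h (pi c) = \sum_(i < p) g (f (c i)) * h s`_i.
  by move=> c; rewrite /pi (add_sum hD); apply: eq_bigr => i _; exact: hZ.
have kill : forall j, (j < q)%N -> exists t, ~ P t /\ t * (\sum_(i < p) f (rs`_j i) * w i) = 0.
  move=> j hj.
  have [_ _ H3] := ld_loc D; apply: H3.
  rewrite rmorph_sum.
  have : g sg * h (pi rs`_j) = 0.
    by have [-> _] := rsR _ (mem_nth 0 hj); rewrite (add0_of hD) mulr0.
  rewrite hpi mulr_sumr => e; rewrite -[X in _ = X]e; apply: eq_bigr => i _.
  by rewrite rmorphM hw //; ring.
have [tau [ntau htau]] := common_kill kill.
pose w' : 'rV[A']_p := \row_(i < p) (tau * w i).
have w'0 : al' w' = 0.
  apply/rowP => j; rewrite !mxE -[RHS](htau j (ltn_ord j)) mulr_sumr.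
  by apply: eq_bigr => i _; rewrite mxE; ring.
have w'sp := flat_kernel alL al'L compat fl w'0.
pose d := cm m1 - cm m2.
pose ev (y : 'rV[A']_p) : A'^o := \sum_(i < p) f (d i) * y 0 i.
have evD : forall x y, ev (x + y) = ev x + ev y.
  by move=> x y; rewrite /ev -big_split; apply: eq_bigr => i _; rewrite mxE mulrDr.
have evZ : forall a x, ev (a *: x) = a *: ev x.
  by move=> a x; rewrite /ev scaler_sumr; apply: eq_bigr => i _; rewrite mxE mulrCA.
have ev0 : ev w' = 0.
  apply: (ispan_ind_lin evD evZ _ w'sp) => y [v [hv ->]].
  rewrite /ev.
  have -> : \sum_(i < p) f (d i) * map_mx f v 0 i = f (dot v d).
    by rewrite rmorph_sum; apply: eq_bigr => i _; rewrite mxE rmorphM mulrC.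
  by rewrite /d (addB_of (dotD v)) -/(gf v m1) -/(gf v m2) gfeq // subrr rmorph0.
have hd : h m1 - h m2 = \sum_(i < p) g (f (d i)) * h s`_i.
  by rewrite -hpi /d piB -!hcm (addB_of hD).
have : g (sg * tau) * (h m1 - h m2) = 0.
  rewrite hd mulr_sumr.
  have e : g (ev w') = 0 by rewrite ev0 rmorph0.
  rewrite -[X in _ = X]e /ev rmorph_sum; apply: eq_bigr => i _.
  by rewrite mxE !rmorphM hw //; ring.
have [H1 _ _] := ld_loc D; have [c hc] := H1 _ (nPM nsg ntau).
move=> e; apply/eqP; rewrite -subr_eq0; apply/eqP.
by rewrite -[h m1 - h m2]mul1r -hc mulrAC e mul0r.
Qed.
End Key.

Unset Implicit Arguments.

Theorem proposition1p2 (A A' : comPzRingType) (f : {rmorphism A -> A'})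
    (M : lmodType A) (M' : lmodType A') (iota : M -> M') :
  noetherian A -> fin_gen M ->
  injective f -> flat f ->
  is_base_change f iota -> locally_free M' ->
  forall m1 m2 : M, bidual_ev m1 = bidual_ev m2 <-> iota m1 = iota m2.
Proof.
move=> HA fgM finj fl bc lf m1 m2; split; last first.
  move=> e; apply: funext => phi; rewrite /bidual_ev.
  have hs : is_semilinear f (fun m => (f (phi m) : A'^o)).
    split=> [x y|a x]; first by rewrite raddfD rmorphD.
    by rewrite linearZ /= rmorphM.
  have [[h' [_ hE]] _] := bc.2 _ _ hs.
  by apply: finj; rewrite -!hE e.
move=> H.
have Hsc : forall phi : {scalar M}, phi m1 = phi m2.
  by move=> phi; have := congr1 (fun F => F phi) H.
have iD : forall x y, iota (x + y) = iota x + iota y by case: bc => [[]].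
apply/eqP; rewrite -subr_eq0; apply/eqP.
set x := iota m1 - iota m2.
case: (lem (x = 0)) => // xn0; exfalso.
pose J a := a *: x = 0.
have Jid : is_ideal J.
  split; first by rewrite /J scale0r.
    by move=> a b ha hb; rewrite /J scalerDl ha hb addr0.
  by move=> r a ha; rewrite /J -scalerA ha scaler0.
have J1 : ~ J 1 by rewrite /J scale1r.
have [P [Pp JP]] := exists_prime Jid J1.
have [B [g [N [j [loc bcj frN]]]]] := lf P Pp.
pose D := LocDat Pp loc.
have jx : j x = 0.
  apply: (@free_sep B N frN (j x)) => phi phil.
  have jD : forall y z, j (y + z) = j y + j z by case: bcj => [[]].
  have jZ : forall (a : A') y, j (a *: y) = g a *: j y by case: bcj => [[]].
  pose h := fun m => phi (j (iota m)).
  have hD : forall y z, h (y + z) = h y + h z.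
    by move=> y z; rewrite /h iD jD; case: phil => -> _.
  have hZ : forall a y, h (a *: y) = ld_g D (f a) * h y.
    move=> a y; rewrite /h; case: bc => [[_ ->]] _; rewrite jZ.
    by case: phil => _ ->.
  have := @key A A' B f M D HA fgM fl m1 m2 Hsc h hD hZ.
  rewrite /h /x (addB_of jD); case: phil => pD _.
  by rewrite (addB_of pD) => ->; rewrite subrr.
have [s [ns sx]] := @loc_kill _ _ D _ _ _ bcj x jx.
by apply: ns; apply: JP.
Qed.
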